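(* The following strict inclusions hold: (1) $\mathrm{SQC}^n\subsetneq \mathrm{CN}^n\subsetneq \mathrm{QC}^n$; (2) $\mathrm{QCP}^n\subsetneq \mathrm{CN}^n$; (3) $\mathrm{CONV}^n\subsetneq \mathrm{CN}^n$.
   Context: All functions considered are $f:\mathrm{dom}(f)\to\mathbb{R}$ with $\mathrm{dom}(f)\subseteq\mathbb{R}^n$ convex. $f$ is quasiconvex if $f(z)\le\max\{f(x),f(y)\}$ for all $x,y\in\mathrm{dom}(f)$, $z\in(x,y)$; strictly quasiconvex if $f(z)<\max\{f(x),f(y)\}$ for all such $x,y,z$ (with $x\ne y$). $\mathrm{QC}^n$, $\mathrm{SQC}^n$, $\mathrm{CONV}^n$ denote the classes of quasiconvex, strictly quasiconvex, and convex functions respectively. $\mathrm{QCP}^n$ is the class of quasiconvex polynomials $\mathbb{R}^n\to\mathbb{R}$ with real coefficients and nonzero degree. A function $f$ is conic if for all $y,z\in\mathrm{dom}(f)$ and all $t\ge 0$ with $f(y)\le f(z)$ and $z+t(z-y)\in\mathrm{dom}(f)$, we have $f(z+t(z-y))\ge f(z)$; $\mathrm{CN}^n$ denotes the class of conic functions. *)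

(* Defs.v *)
From Stdlib Require Fin.
From Stdlib Require Import Reals.
Open Scope R_scope.

Definition vec (n : nat) := Fin.t n -> R.

Definition lerp {n : nat} (x y : vec n) (t : R) : vec n :=
  fun i => x i + t * (y i - x i).

(* A (partial) function f : dom(f) -> R, dom(f) ⊆ R^n, is modelled by the
   pair (D, f) with D : vec n -> Prop its domain and f : vec n -> R whose
   values outside D are irrelevant.  All classes below only inspect f on D. *)
Definition convex_set {n : nat} (D : vec n -> Prop) : Prop :=
  forall x y t, D x -> D y -> 0 <= t <= 1 -> D (lerp x y t).

Definition quasiconvex {n : nat} (D : vec n -> Prop) (f : vec n -> R) : Prop :=
  convex_set D /\
  forall x y s, D x -> D y -> 0 < s < 1 ->
    f (lerp x y s) <= Rmax (f x) (f y).

Definition strictly_quasiconvex {n : nat} (D : vec n -> Prop) (f : vec n -> R) : Prop :=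
  convex_set D /\
  forall x y s, D x -> D y -> x <> y -> 0 < s < 1 ->
    f (lerp x y s) < Rmax (f x) (f y).

Definition convex_fun {n : nat} (D : vec n -> Prop) (f : vec n -> R) : Prop :=
  convex_set D /\
  forall x y t, D x -> D y -> 0 <= t <= 1 ->
    f (lerp x y t) <= (1 - t) * f x + t * f y.

Definition conic {n : nat} (D : vec n -> Prop) (f : vec n -> R) : Prop :=
  convex_set D /\
  forall y z t, D y -> D z -> 0 <= t -> f y <= f z ->
    D (fun i => z i + t * (z i - y i)) ->
    f (fun i => z i + t * (z i - y i)) >= f z.

Inductive is_poly {n : nat} : (vec n -> R) -> Prop :=
| poly_const (c : R) : is_poly (fun _ => c)
| poly_var (i : Fin.t n) : is_poly (fun x => x i)
| poly_add (f g : vec n -> R) : is_poly f -> is_poly g -> is_poly (fun x => f x + g x)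
| poly_mul (f g : vec n -> R) : is_poly f -> is_poly g -> is_poly (fun x => f x * g x).

(* Over R, a
   polynomial has degree 0 (or is the zero polynomial) iff its polynomial
   function is constant, so "nonzero degree" = not a constant function. *)
Definition QCP {n : nat} (D : vec n -> Prop) (f : vec n -> R) : Prop :=
  (forall x, D x) /\ is_poly f /\ (exists x y, f x <> f y) /\ quasiconvex D f.

Definition subclass {n : nat} (A B : (vec n -> Prop) -> (vec n -> R) -> Prop) : Prop :=
  forall D f, A D f -> B D f.

Definition strict_subclass {n : nat} (A B : (vec n -> Prop) -> (vec n -> R) -> Prop) : Prop :=
  subclass A B /\ exists D f, B D f /\ ~ A D f.

(* Main.v *)
Require Import Defs.
From Stdlib Require Import Reals.
From Stdlib Require Import Lra Lia Psatz List FunctionalExtensionality Classical.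
Open Scope R_scope.

Fixpoint peval (p : list R) (s : R) : R :=
  match p with nil => 0 | a :: q => a + s * peval q s end.

Fixpoint padd (p q : list R) : list R :=
  match p, q with
  | nil, _ => q
  | _, nil => p
  | a :: p', b :: q' => (a + b) :: padd p' q'
  end.

Lemma padd_ok p q s : peval (padd p q) s = peval p s + peval q s.
Proof.
  revert q; induction p as [|a p IH]; intros [|b q]; simpl; try ring.
  rewrite IH; ring.
Qed.

Definition pscale (c : R) (p : list R) := map (fun a => c * a) p.
Lemma pscale_ok c p s : peval (pscale c p) s = c * peval p s.
Proof. induction p as [|a p IH]; simpl; [ring|rewrite IH; ring]. Qed.

Fixpoint pmul (p q : list R) : list R :=
  match p with nil => nil | a :: p' => padd (pscale a q) (0 :: pmul p' q) end.
Lemma pmul_ok p q s : peval (pmul p q) s = peval p s * peval q s.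
Proof.
  induction p as [|a p IH]; simpl; [ring|].
  rewrite padd_ok, pscale_ok; simpl; rewrite IH; ring.
Qed.

Lemma poly_line {n : nat} (f : vec n -> R) : is_poly f ->
  forall y z, exists p, forall s, f (lerp y z s) = peval p s.
Proof.
  induction 1 as [c|i|f g Hf IHf Hg IHg|f g Hf IHf Hg IHg]; intros y z.
  - exists (c :: nil); intros s; simpl; ring.
  - exists (y i :: (z i - y i) :: nil); intros s; unfold lerp; simpl; ring.
  - destruct (IHf y z) as [p Hp]; destruct (IHg y z) as [q Hq].
    exists (padd p q); intros s; rewrite padd_ok, Hp, Hq; ring.
  - destruct (IHf y z) as [p Hp]; destruct (IHg y z) as [q Hq].
    exists (pmul p q); intros s; rewrite pmul_ok, Hp, Hq; ring.
Qed.

Lemma peval_bound p : exists B, forall s, 0 < s < 1 -> Rabs (peval p s) <= B.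
Proof.
  induction p as [|a q [B HB]].
  - exists 0; intros s _; simpl; rewrite Rabs_R0; lra.
  - exists (Rabs a + B); intros s Hs; simpl.
    eapply Rle_trans; [apply Rabs_triang|].
    rewrite Rabs_mult.
    assert (Rabs s <= 1) by (rewrite Rabs_right; lra).
    specialize (HB s Hs).
    assert (0 <= Rabs (peval q s)) by apply Rabs_pos.
    nra.
Qed.

Lemma peval_zero p : (forall s, 0 < s < 1 -> peval p s = 0) -> forall s, peval p s = 0.
Proof.
  induction p as [|a q IH]; intros H s; simpl; [reflexivity|].
  destruct (peval_bound q) as [B HB].
  assert (HB0 : 0 <= B).
  { specialize (HB (1/2) ltac:(lra)). pose proof (Rabs_pos (peval q (1/2))); lra. }
  assert (Ha : a = 0).
  { destruct (Req_dec a 0) as [|Hne]; [assumption|exfalso].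
    assert (Hpa : 0 < Rabs a) by (apply Rabs_pos_lt; assumption).
    set (s0 := Rmin (1/2) (Rabs a / (2 * (B + 1)))).
    assert (Hs1 : s0 <= 1/2) by apply Rmin_l.
    assert (Hs2 : s0 <= Rabs a / (2 * (B + 1))) by apply Rmin_r.
    assert (Hs0 : 0 < s0).
    { unfold s0; apply Rmin_glb_lt; [lra|]. apply Rdiv_lt_0_compat; lra. }
    specialize (H s0 ltac:(lra)); simpl in H.
    specialize (HB s0 ltac:(lra)).
    assert (Ea : a = - (s0 * peval q s0)) by lra.
    assert (Rabs a = s0 * Rabs (peval q s0)).
    { rewrite Ea, Rabs_Ropp, Rabs_mult, Rabs_right; lra. }
    assert (s0 * (2 * (B + 1)) <= Rabs a).
    { apply (Rmult_le_compat_r (2 * (B+1))) in Hs2; [|lra].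
      unfold Rdiv in Hs2. rewrite Rmult_assoc, Rinv_l in Hs2; lra. }
    nra. }
  subst a.
  rewrite IH; [ring|].
  intros s1 Hs1. specialize (H s1 Hs1); simpl in H.
  destruct (Rmult_integral s1 (peval q s1)) as [|]; [lra|lra|assumption].
Qed.

Lemma peval_const p c : (forall s, 0 < s < 1 -> peval p s = c) -> forall s, peval p s = c.
Proof.
  intros H s.
  pose proof (peval_zero (padd p (- c :: nil))) as Z.
  assert (forall s, peval (padd p (-c :: nil)) s = peval p s - c)
    by (intros; rewrite padd_ok; simpl; ring).
  specialize (Z ltac:(intros s1 Hs1; rewrite H0, H; [ring|assumption]) s).
  rewrite H0 in Z; lra.
Qed.

Lemma wform {n : nat} (y z : vec n) t :
  (fun i => z i + t * (z i - y i)) = lerp y z (1 + t).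
Proof. apply functional_extensionality; intro i; unfold lerp; ring. Qed.

Lemma Rmax_cases a b : Rmax a b = a /\ b <= a \/ Rmax a b = b /\ a <= b.
Proof. unfold Rmax; destruct (Rle_dec a b); [right|left]; lra. Qed.

Lemma cube_le a b : a <= b -> a ^ 3 <= b ^ 3.
Proof.
  intro H.
  assert (0 <= a*a + a*b + b*b).
  { assert (a*a + a*b + b*b = (a + b/2)*(a+b/2) + 3/4*(b*b)) by field.
    pose proof (Rle_0_sqr (a + b/2)); pose proof (Rle_0_sqr b); unfold Rsqr in *; lra. }
  assert (b^3 - a^3 = (b - a) * (a*a + a*b + b*b)) by ring.
  assert (0 <= (b - a) * (a*a + a*b + b*b)) by (apply Rmult_le_pos; lra).
  lra.
Qed.

Lemma cube_lt a b : a < b -> a ^ 3 < b ^ 3.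
Proof.
  intro H.
  assert (0 < a*a + a*b + b*b).
  { assert (a*a + a*b + b*b = (a + b/2)*(a+b/2) + 3/4*(b*b)) by field.
    pose proof (Rle_0_sqr (a + b/2)); unfold Rsqr in *.
    destruct (Req_dec b 0) as [Hb|Hb].
    - subst b. assert (Ha : a <> 0) by lra.
      apply Rsqr_pos_lt in Ha; unfold Rsqr in Ha. lra.
    - assert (0 < b*b) by (apply Rsqr_pos_lt in Hb; unfold Rsqr in Hb; lra). lra. }
  assert (b^3 - a^3 = (b - a) * (a*a + a*b + b*b)) by ring.
  assert (0 < (b - a) * (a*a + a*b + b*b)) by (apply Rmult_lt_0_compat; lra).
  lra.
Qed.

Lemma sqc_conic {n : nat} D (f : vec n -> R) : strictly_quasiconvex D f -> conic D f.
Proof.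
  intros [Hc H]; split; [exact Hc|].
  intros y z t Hy Hz Ht Hf Hw.
  apply Rnot_lt_ge; intro Hlt.
  set (w := fun i => z i + t * (z i - y i)) in *.
  destruct (Req_dec t 0) as [Ht0|Ht0].
  { assert (w = z) by (apply functional_extensionality; intro i; unfold w; rewrite Ht0; ring).
    rewrite H0 in Hlt; lra. }
  destruct (classic (y = z)) as [Eyz|Nyz].
  { assert (w = z) by (apply functional_extensionality; intro i; unfold w; rewrite Eyz; ring).
    rewrite H0 in Hlt; lra. }
  assert (Nyw : y <> w).
  { intro E; apply Nyz; apply functional_extensionality; intro i.
    pose proof (equal_f E i) as Ei; unfold w in Ei.
    assert ((1 + t) * (y i - z i) = 0) by lra.
    destruct (Rmult_integral _ _ H0); lra. }
  assert (Ez : lerp y w (1 / (1 + t)) = z).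
  { apply functional_extensionality; intro i; unfold w, lerp; field; lra. }
  pose proof (H y w (1 / (1 + t)) Hy Hw Nyw) as Hs.
  assert (0 < 1 / (1 + t) < 1).
  { split; [apply Rdiv_lt_0_compat; lra|].
    apply (Rmult_lt_reg_r (1 + t)); [lra|]. unfold Rdiv. rewrite Rmult_assoc, Rinv_l; lra. }
  specialize (Hs H0); rewrite Ez in Hs.
  destruct (Rmax_cases (f y) (f w)) as [[E _]|[E _]]; rewrite E in Hs; lra.
Qed.

Lemma conic_qc {n : nat} D (f : vec n -> R) : conic D f -> quasiconvex D f.
Proof.
  intros [Hc H]; split; [exact Hc|].
  intros x y s Hx Hy Hs.
  apply Rnot_lt_le; intro Hlt.
  set (z := lerp x y s) in *.
  assert (Hz : D z) by (apply Hc; auto; lra).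
  assert (E : (fun i => z i + ((1 - s) / s) * (z i - x i)) = y).
  { apply functional_extensionality; intro i; unfold z, lerp; field; lra. }
  assert (Hm1 : f x <= Rmax (f x) (f y)) by apply Rmax_l.
  assert (Hm2 : f y <= Rmax (f x) (f y)) by apply Rmax_r.
  pose proof (H x z ((1 - s) / s) Hx Hz) as Hc2.
  rewrite E in Hc2.
  assert (0 <= (1 - s) / s) by (left; apply Rdiv_lt_0_compat; lra).
  specialize (Hc2 H0 ltac:(lra) Hy). lra.
Qed.

Lemma conv_conic {n : nat} D (f : vec n -> R) : convex_fun D f -> conic D f.
Proof.
  intros [Hc H]; split; [exact Hc|].
  intros y z t Hy Hz Ht Hf Hw.
  apply Rnot_lt_ge; intro Hlt.
  set (w := fun i => z i + t * (z i - y i)) in *.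
  assert (Ez : lerp y w (1 / (1 + t)) = z).
  { apply functional_extensionality; intro i; unfold w, lerp; field; lra. }
  assert (0 < 1 / (1 + t) <= 1).
  { split; [apply Rdiv_lt_0_compat; lra|].
    apply (Rmult_le_reg_r (1 + t)); [lra|]. unfold Rdiv. rewrite Rmult_assoc, Rinv_l; lra. }
  pose proof (H y w (1 / (1 + t)) Hy Hw ltac:(lra)) as Hs.
  rewrite Ez in Hs. nra.
Qed.

Lemma qcp_conic {n : nat} D (f : vec n -> R) : QCP D f -> conic D f.
Proof.
  intros [HD [Hp [_ [Hc H]]]]; split; [exact Hc|].
  intros y z t Hy Hz Ht Hf Hw.
  rewrite wform.
  apply Rnot_lt_ge; intro Hlt.
  assert (Ez1 : lerp y z 1 = z)
    by (apply functional_extensionality; intro i; unfold lerp; ring).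
  destruct (Req_dec t 0) as [Ht0|Ht0].
  { rewrite Ht0, Rplus_0_r, Ez1 in Hlt; lra. }
  set (w := lerp y z (1 + t)) in *.
  assert (Ez : lerp y w (1 / (1 + t)) = z).
  { apply functional_extensionality; intro i; unfold w, lerp; field; lra. }
  assert (Hr : 0 < 1 / (1 + t) < 1).
  { split; [apply Rdiv_lt_0_compat; lra|].
    apply (Rmult_lt_reg_r (1 + t)); [lra|]. unfold Rdiv. rewrite Rmult_assoc, Rinv_l; lra. }
  pose proof (H y w _ Hy (HD w) Hr) as H1; rewrite Ez in H1.
  assert (Hyz : f y = f z).
  { destruct (Rmax_cases (f y) (f w)) as [[E _]|[E _]]; rewrite E in H1; lra. }
  destruct (poly_line f Hp y z) as [p Hpe].
  assert (Hcst : forall s, 0 < s < 1 -> peval p s = f z).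
  { intros s Hs. rewrite <- Hpe.
    pose proof (H y z s Hy Hz Hs) as H2.
    assert (Rmax (f y) (f z) = f z) by (rewrite Hyz; unfold Rmax; destruct Rle_dec; lra).
    rewrite H0 in H2.
    assert (E2 : lerp (lerp y z s) w ((1 - s) / (1 + t - s)) = z).
    { apply functional_extensionality; intro i; unfold w, lerp; field; lra. }
    assert (Hr2 : 0 < (1 - s) / (1 + t - s) < 1).
    { split; [apply Rdiv_lt_0_compat; lra|].
      apply (Rmult_lt_reg_r (1 + t - s)); [lra|]. unfold Rdiv. rewrite Rmult_assoc, Rinv_l; lra. }
    pose proof (H (lerp y z s) w _ (HD _) (HD w) Hr2) as H3; rewrite E2 in H3.
    destruct (Rmax_cases (f (lerp y z s)) (f w)) as [[E _]|[E _]]; rewrite E in H3; lra. }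
  pose proof (peval_const p (f z) Hcst (1 + t)) as Hend.
  unfold w in Hlt; rewrite Hpe in Hlt; lra.
Qed.

Theorem mainTheorem2 (n : nat) (hn : (1 <= n)%nat) :
  (@strict_subclass n strictly_quasiconvex conic /\
   @strict_subclass n conic quasiconvex) /\
  @strict_subclass n QCP conic /\
  @strict_subclass n convex_fun conic.
Proof.
  destruct n as [|m]; [lia|].
  set (i0 := @Fin.F1 m).
  assert (cT : @convex_set (S m) (fun _ => True)) by (intros ? ? ? ? ? ?; exact I).
  assert (Kc : conic (fun _ : vec (S m) => True) (fun _ => 0)).
  { split; [exact cT|]. intros; lra. }
  split; [split|split].
  - split; [intros D f; apply sqc_conic|].
    exists (fun _ => True), (fun _ => 0); split; [exact Kc|].
    intros [_ H].
    specialize (H (fun _ => 0) (fun _ => 1) (1/2) I I).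
    assert ((fun _ : Fin.t (S m) => 0) <> (fun _ => 1 : R)) as Hne.
    { intro E; pose proof (equal_f E i0); simpl in *; lra. }
    specialize (H Hne ltac:(lra)). unfold Rmax in H; destruct Rle_dec; lra.
  - split; [intros D f; apply conic_qc|].
    exists (fun _ => True), (fun x => if Rle_dec (x i0) 0 then 0 else -1).
    split.
    + split; [exact cT|]. intros x y s _ _ Hs. unfold lerp.
      destruct (Rle_dec (x i0 + s * (y i0 - x i0)) 0);
      destruct (Rle_dec (x i0) 0); destruct (Rle_dec (y i0) 0);
      unfold Rmax; destruct Rle_dec; try lra; nra.
    + intros [_ H].
      specialize (H (fun _ => -2) (fun _ => -1) 2 I I ltac:(lra)).
      destruct (Rle_dec (-2) 0); [|lra]; destruct (Rle_dec (-1) 0); [|lra].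
      specialize (H ltac:(lra) I).
      destruct (Rle_dec (-1 + 2 * (-1 - -2)) 0); lra.
  - split; [intros D f; apply qcp_conic|].
    exists (fun _ => True), (fun _ => 0); split; [exact Kc|].
    intros [_ [_ [[x [y H]] _]]]; apply H; reflexivity.
  - split; [intros D f; apply conv_conic|].
    exists (fun _ => True), (fun x => (x i0) ^ 3). split.
    + split; [exact cT|]. intros y z t _ _ Ht Hf _.
      apply Rle_ge. apply cube_le.
      destruct (Rle_lt_dec (y i0) (z i0)) as [|Hl]; [nra|].
      pose proof (cube_lt _ _ Hl); lra.
    + intros [_ H].
      specialize (H (fun _ => -2) (fun _ => 0) (1/2) I I ltac:(lra)).
      unfold lerp in H. simpl in H. lra.
Qed.
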